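(* Let $X$ be a complete CAT(0) space and $(T_n)_{n\in\mathbb{N}}$ a family of self-mappings of $X$, each satisfying property $(P_2)$, with $F:=\bigcap_{n\in\mathbb{N}} Fix(T_n)\neq\emptyset$. For $x\in X$ let $x_0:=x$ and $x_{n+1}:=T_nx_n$ for all $n$. Let $(\gamma_n)$ be a sequence of positive reals with $\sum_{n=0}^\infty\gamma_n^2=\infty$. Assume: (C1) for all $n,m\in\mathbb{N}$ and all $w\in X$, $d(T_nw,T_mw)\le \frac{|\gamma_n-\gamma_m|}{\gamma_n}d(w,T_nw)$; (C2) the sequence $\left(\frac{d(x_n,x_{n+1})}{\gamma_n}\right)_{n}$ is nonincreasing. Then for every $m\in\mathbb{N}$, $\lim_{n\to\infty} d(x_n,T_mx_n)=0$.
   Context: A geodesic space $(X,d)$ is CAT(0) if for all $z\in X$, all geodesics $\gamma:[a,b]\to X$ and all $t\in[0,1]$, $d^2(z,\gamma((1-t)a+tb))\le(1-t)d^2(z,\gamma(a))+td^2(z,\gamma(b))-t(1-t)d^2(\gamma(a),\gamma(b))$. A mapping $T:X\to X$ satisfies property $(P_2)$ if for all $x,y\in X$, $2d^2(Tx,Ty)\le d^2(x,Ty)+d^2(y,Tx)-d^2(x,Tx)-d^2(y,Ty)$. $Fix(T)$ is the fixed point set of $T$. *)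

(* Defs.v *)
From Stdlib Require Import Reals Lra.
Open Scope R_scope.

Definition is_metric {X : Type} (d : X -> X -> R) : Prop :=
  (forall x y, 0 <= d x y) /\
  (forall x y, d x y = 0 <-> x = y) /\
  (forall x y, d x y = d y x) /\
  (forall x y z, d x z <= d x y + d y z).

Definition is_geodesic {X : Type} (d : X -> X -> R) (g : R -> X) (a b : R) : Prop :=
  a <= b /\
  forall s t, a <= s <= b -> a <= t <= b -> d (g s) (g t) = Rabs (s - t).

Definition geodesic_space {X : Type} (d : X -> X -> R) : Prop :=
  is_metric d /\
  forall x y, exists g : R -> X,
    is_geodesic d g 0 (d x y) /\ g 0 = x /\ g (d x y) = y.

Definition CAT0 {X : Type} (d : X -> X -> R) : Prop :=
  geodesic_space d /\
  forall (z : X) (g : R -> X) (a b : R), is_geodesic d g a b ->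
  forall t, 0 <= t <= 1 ->
    (d z (g ((1 - t) * a + t * b))) ^ 2 <=
      (1 - t) * (d z (g a)) ^ 2 + t * (d z (g b)) ^ 2
      - t * (1 - t) * (d (g a) (g b)) ^ 2.

Definition cauchy_seq {X : Type} (d : X -> X -> R) (u : nat -> X) : Prop :=
  forall eps, 0 < eps -> exists N, forall n m, (n >= N)%nat -> (m >= N)%nat ->
    d (u n) (u m) < eps.

Definition converges_to {X : Type} (d : X -> X -> R) (u : nat -> X) (l : X) : Prop :=
  forall eps, 0 < eps -> exists N, forall n, (n >= N)%nat -> d (u n) l < eps.

Definition complete {X : Type} (d : X -> X -> R) : Prop :=
  forall u, cauchy_seq d u -> exists l, converges_to d u l.

Definition P2 {X : Type} (d : X -> X -> R) (T : X -> X) : Prop :=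
  forall x y, 2 * (d (T x) (T y)) ^ 2 <=
    (d x (T y)) ^ 2 + (d y (T x)) ^ 2 - (d x (T x)) ^ 2 - (d y (T y)) ^ 2.

Definition Fix {X : Type} (T : X -> X) : X -> Prop := fun p => T p = p.

Fixpoint iter_seq {X : Type} (T : nat -> X -> X) (x : X) (n : nat) : X :=
  match n with
  | O => x
  | S k => T k (iter_seq T x k)
  end.

(* Main.v *)
Require Import Defs.
From Stdlib Require Import Reals.
From Stdlib Require Import Lra Lia Psatz.
Open Scope R_scope.

Lemma key_P2 {X : Type} (d : X -> X -> R) (HX : CAT0 d) (T : X -> X)
  (H : P2 d T) p (Hp : T p = p) z :
  d (T z) p ^ 2 <= d z p ^ 2 - d z (T z) ^ 2.
Proof.
  destruct HX as [[[H0 [H1 [H2 H3]]] _] _].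
  pose proof (H z p) as K. rewrite Hp in K.
  assert (E : d p p = 0) by (apply H1; reflexivity).
  rewrite E, (H2 p (T z)) in K. lra.
Qed.

Theorem proposition3p4 (X : Type) (d : X -> X -> R)
  (HX : CAT0 d) (Hc : complete d)
  (T : nat -> X -> X) (HP2 : forall n, P2 d (T n))
  (HF : exists p, forall n, Fix (T n) p)
  (x : X) (gam : nat -> R) (Hgam : forall n, 0 < gam n)
  (Hdiv : forall M, exists N, M < sum_f_R0 (fun k => gam k ^ 2) N)
  (C1 : forall n m w, d (T n w) (T m w) <= Rabs (gam n - gam m) / gam n * d w (T n w))
  (C2 : forall n,
     d (iter_seq T x (S n)) (iter_seq T x (S (S n))) / gam (S n)
       <= d (iter_seq T x n) (iter_seq T x (S n)) / gam n) :
  forall m, Un_cv (fun n => d (iter_seq T x n) (T m (iter_seq T x n))) 0.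
Proof.
  destruct HF as [p Hp].
  pose proof HX as HX'.
  destruct HX' as [[[H0 [H1 [H2 H3]]] _] _].
  set (u := iter_seq T x).
  set (dd := fun n => d (u n) (u (S n))).
  set (a := fun n => dd n / gam n).
  set (D := fun n => d (u n) p ^ 2).
  assert (Hstep : forall n, dd n ^ 2 <= D n - D (S n)).
  { intro n. unfold dd, D. change (u (S n)) with (T n (u n)).
    pose proof (key_P2 d HX (T n) (HP2 n) p (Hp n) (u n)). lra. }
  assert (Hdd0 : forall n, 0 <= dd n) by (intro; apply H0).
  assert (HD0 : forall n, 0 <= D n) by (intro; unfold D; apply pow2_ge_0).
  assert (Ha0 : forall n, 0 <= a n).
  { intro n. unfold a. apply Rmult_le_pos; [apply Hdd0|].
    left; apply Rinv_0_lt_compat, Hgam. }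
  assert (Hda : forall n, dd n = a n * gam n).
  { intro n. unfold a. field. apply Rgt_not_eq, Hgam. }
  assert (Hamono : forall j k, a (k + j)%nat <= a k).
  { induction j; intro k. rewrite Nat.add_0_r; lra.
    replace (k + S j)%nat with (S (k + j)) by lia.
    eapply Rle_trans; [apply C2|apply IHj]. }
  assert (Hamono' : forall k n, (k <= n)%nat -> a n <= a k).
  { intros k n Hk. replace n with (k + (n - k))%nat by lia. apply Hamono. }
  assert (Hsum : forall N, sum_f_R0 (fun k => dd k ^ 2) N <= D 0%nat - D (S N)).
  { induction N. simpl. pose proof (Hstep 0%nat). lra. rewrite tech5. pose proof (Hstep (S N)). lra. }
  assert (Hsum2 : forall n M, (M <= n)%nat ->
     a n ^ 2 * sum_f_R0 (fun k => gam k ^ 2) M <= sum_f_R0 (fun k => dd k ^ 2) M).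
  { intros n M. induction M; intro HM.
    - unfold sum_f_R0. rewrite Hda. pose proof (Hamono' 0%nat n HM). pose proof (Ha0 n).
      pose proof (Hgam 0%nat).
      assert (a n ^ 2 <= a 0%nat ^ 2) by nra. pose proof (pow2_ge_0 (gam 0%nat)).
      rewrite Rpow_mult_distr. nra.
    - rewrite !tech5. rewrite Rmult_plus_distr_l. apply Rplus_le_compat. apply IHM; lia.
      rewrite (Hda (S M)). pose proof (Hamono' (S M) n HM). pose proof (Ha0 n).
      pose proof (Hgam (S M)).
      assert (a n ^ 2 <= a (S M) ^ 2) by nra. pose proof (pow2_ge_0 (gam (S M))).
      rewrite Rpow_mult_distr. nra. }
  assert (Ha : forall eps, 0 < eps -> exists N, forall n, (n >= N)%nat -> a n < eps).
  { intros eps Heps. destruct (Hdiv (D 0%nat / eps ^ 2)) as [N HN].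
    exists N. intros n Hn.
    assert (E : D 0%nat = D 0%nat / eps ^ 2 * eps ^ 2) by (field; lra).
    assert (Hpos : 0 < eps ^ 2) by (apply pow_lt; lra).
    assert (0 <= D 0%nat / eps ^ 2) by (apply Rmult_le_pos; [apply HD0| left; apply Rinv_0_lt_compat; lra]).
    pose proof (Hsum2 n N Hn). pose proof (Hsum N). pose proof (HD0 (S N)).
    pose proof (Ha0 n).
    assert (a n ^ 2 * sum_f_R0 (fun k => gam k ^ 2) N < eps ^ 2 * sum_f_R0 (fun k => gam k ^ 2) N) by nra.
    assert (a n ^ 2 < eps ^ 2) by nra. nra. }
  assert (Hdc : forall eps, 0 < eps -> exists N, forall n, (n >= N)%nat -> dd n < eps).
  { destruct (decreasing_cv D) as [L HL].
    - intro n. pose proof (Hstep n). pose proof (pow2_ge_0 (dd n)). lra.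
    - exists 0. intros r [i ->]. unfold opp_seq. pose proof (HD0 i). lra.
    - intros eps Heps.
      assert (Hpos : 0 < eps ^ 2 / 2) by (apply Rmult_lt_0_compat; [apply pow_lt; lra| lra]).
      destruct (HL _ Hpos) as [N HN]. exists N. intros n Hn.
      pose proof (HN n Hn). pose proof (HN (S n) ltac:(lia)).
      unfold R_dist in *. apply Rabs_def2 in H. apply Rabs_def2 in H4.
      pose proof (Hstep n). pose proof (Hdd0 n). nra. }
  intros m eps Heps.
  assert (Hgm := Hgam m).
  destruct (Hdc (eps / 4)) as [N1 HN1]; [lra|].
  destruct (Ha (eps / (2 * gam m))) as [N2 HN2].
  { apply Rmult_lt_0_compat; [lra| apply Rinv_0_lt_compat; lra]. }
  exists (max N1 N2). intros n Hn.
  unfold R_dist. rewrite Rminus_0_r, Rabs_pos_eq by apply H0.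
  assert (Hb : d (u n) (T m (u n)) <= 2 * dd n + gam m * a n).
  { eapply Rle_trans. apply (H3 _ (T n (u n))).
    pose proof (C1 n m (u n)) as K. change (T n (u n)) with (u (S n)) in *.
    fold (dd n) in *.
    assert (Rabs (gam n - gam m) <= gam n + gam m).
    { pose proof (Hgam n). apply Rabs_le; lra. }
    assert (Rabs (gam n - gam m) / gam n * dd n <= (gam n + gam m) / gam n * dd n).
    { apply Rmult_le_compat_r; [apply Hdd0|]. apply Rmult_le_compat_r; [|lra].
      left; apply Rinv_0_lt_compat, Hgam. }
    assert (E : (gam n + gam m) / gam n * dd n = dd n + gam m * a n).
    { unfold a. field. apply Rgt_not_eq, Hgam. }
    lra. }
  pose proof (HN1 n ltac:(lia)). pose proof (HN2 n ltac:(lia)).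
  assert (gam m * a n < gam m * (eps / (2 * gam m))) by (apply Rmult_lt_compat_l; lra).
  assert (E : gam m * (eps / (2 * gam m)) = eps / 2) by (field; lra).
  lra.
Qed.
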